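(* Every forest of order $n$ has at most $4^{n/5}$ perfect total dominating sets. The bound is attained by disjoint unions of stars on $5$ vertices ($K_{1,4}$).
   Context: A perfect total dominating set of a graph $G=(V,E)$ is a set $D\subseteq V$ such that every vertex of $V$ (whether in $D$ or not) has exactly one neighbour in $D$. Order = number of vertices. *)

(* Defs.v *)
From mathcomp Require Import all_boot.
Set Implicit Arguments. Unset Strict Implicit. Unset Printing Implicit Defensive.

Definition simple_graph (T : finType) (e : rel T) : Prop :=
  symmetric e /\ irreflexive e.

Definition has_cycle (T : finType) (e : rel T) : Prop :=
  exists p : seq T, [/\ uniq p, 3 <= size p & cycle e p].

Definition forest (T : finType) (e : rel T) : Prop :=
  simple_graph e /\ ~ has_cycle e.

Definition nbhd (T : finType) (e : rel T) (v : T) : {set T} := [set u | e v u].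

Definition perfect_total_dominating (T : finType) (e : rel T) (D : {set T}) : bool :=
  [forall v, #|nbhd e v :&: D| == 1].

Definition num_ptds (T : finType) (e : rel T) : nat :=
  #|[set D : {set T} | perfect_total_dominating e D]|.

(* Disjoint union of k copies of the star K_{1,4}: vertices (i, a) with
   i : 'I_k the copy and a : 'I_5; vertex a = 0 is the centre. *)
Definition star_forest_edge (k : nat) : rel (prod (ordinal k) (ordinal 5)) :=
  fun x y => (x.1 == y.1) && ((val x.2 == 0) != (val y.2 == 0)).
Arguments star_forest_edge k : clear implicits.

(* Main.v *)
Require Import Defs.
From mathcomp Require Import all_boot.
From mathcomp Require Import zify.
From Stdlib Require Import Classical.
Set Implicit Arguments. Unset Strict Implicit. Unset Printing Implicit Defensive.

Lemma card_bigcup_leq (T I : finType) (A : pred I) (F : I -> {set T}) :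
  #|\bigcup_(i in A) F i| <= \sum_(i in A) #|F i|.
Proof.
elim/big_rec2: _ => [|i y x _ h]; first by rewrite cards0.
apply: leq_trans (leq_card_setU _ _) _; exact: leq_add.
Qed.

Lemma pow5_bound k : k ^ 5 <= 4 ^ k.+1.
Proof.
have H : forall j, (j + 5) ^ 5 <= 4 * (j + 4) ^ 5.
  move=> j; rewrite !expnS expn0 !muln1; nia.
case: k => [|[|[|[|k]]]] //.
elim: k => [|k IH] //.
rewrite expnS; apply: leq_trans (leq_mul (leqnn 4) IH).
have := H k. have -> : k + 5 = k.+4.+1 by lia. by have -> : k + 4 = k.+4 by lia.
Qed.

Definition goodS (T : finType) (e : rel T) (S D : {set T}) : bool :=
  (D \subset S) && [forall v in S, #|nbhd e v :&: D| == 1].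
Definition PS (T : finType) (e : rel T) (S : {set T}) := #|[set D | goodS e S D]|.

Lemma num_ptds_PS (T : finType) (e : rel T) : num_ptds e = PS e setT.
Proof.
rewrite /num_ptds /PS; apply: eq_card => D; rewrite !inE /goodS subsetT /=.
apply/forallP/forallP => H v; first by apply/implyP => _; exact: H.
by have := H v; rewrite inE.
Qed.

Lemma card1_eq (T : finType) (A : {set T}) a b :
  #|A| == 1 -> a \in A -> b \in A -> a = b.
Proof. by case/cards1P=> x ->; rewrite !inE => /eqP -> /eqP ->. Qed.

Section Count.
Variables (T : finType) (e : rel T).
Hypothesis esym : symmetric e.
Hypothesis eirr : irreflexive e.

Variables (S : {set T}) (u w y0 : T).
Hypotheses (uS : u \in S) (wS : w \in S) (euw : e u w) (y0S : y0 \in S)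
  (euy0 : e u y0) (leafy0 : forall z, z \in S -> e y0 z -> z = u)
  (leaves : forall y, y \in S -> e u y -> y != w -> forall z, z \in S -> e y z -> z = u).

Let N := S :&: nbhd e u.
Let S1 := S :\: (u |: N).
Let S2 := S1 :\: nbhd e w.
Let A y := [set D | goodS e S D & y \in D].

Lemma good_sub D : goodS e S D -> D \subset S.
Proof. by case/andP. Qed.

Lemma good_card D v : goodS e S D -> v \in S -> #|nbhd e v :&: D| == 1.
Proof. by case/andP=> _ /forallP H vS; have := H v; rewrite vS. Qed.

Lemma good_u D : goodS e S D -> u \in D.
Proof.
move=> gD; have /cards1P [z Hz] := good_card gD y0S.
have : z \in nbhd e y0 :&: D by rewrite Hz set11.
rewrite !inE => /andP [ez zD].
have zS : z \in S by apply: (subsetP (good_sub gD)).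
by rewrite -(leafy0 zS ez).
Qed.

Lemma good_uniq D a b : goodS e S D -> e u a -> e u b -> a \in D -> b \in D -> a = b.
Proof.
move=> gD ea eb aD bD; apply: (card1_eq (good_card gD uS)); by rewrite !inE ?ea ?eb ?aD ?bD.
Qed.

Lemma cover_A : [set D | goodS e S D] \subset \bigcup_(y in N) A y.
Proof.
apply/subsetP => D; rewrite inE => gD.
have /cards1P [z Hz] := good_card gD uS.
have : z \in nbhd e u :&: D by rewrite Hz set11.
rewrite !inE => /andP [ez zD].
have zS : z \in S by apply: (subsetP (good_sub gD)).
by apply/bigcupP; exists z; rewrite !inE ?zS ?ez ?gD ?zD.
Qed.

Lemma A_other y : y \in N -> y != w -> #|A y| <= PS e S1.
Proof.
rewrite inE => /andP [yS]; rewrite inE => euy ynw.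
have decomp : {in A y, forall D, D = (D :&: S1) :|: [set u; y]}.
  move=> D; rewrite inE => /andP [gD yD]; apply/setP => x.
  rewrite !inE; case xD: (x \in D); last first.
    case: eqP => [xu|_]; first by move: xD; rewrite xu (good_u gD).
    by case: eqP => // xy; rewrite xy yD in xD.
  have xS : x \in S by apply: (subsetP (good_sub gD)).
  rewrite xS /=; case: (x =P u) => [|_]; first by rewrite orbT.
  case exu: (e u x) => /=; last by [].
  by rewrite (good_uniq gD exu euy xD yD) eqxx.
apply: (@leq_trans #|(fun D => D :&: S1) @: A _|).
  rewrite card_in_imset //.
  by move=> D1 D2 h1 h2 /= E; rewrite (decomp _ h1) (decomp _ h2) E.
apply: subset_leq_card; apply/subsetP => D1 /imsetP [D]; rewrite /A inE.
move=> /andP [gD yD] ->; rewrite inE /goodS subsetIr /=.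
apply/forallP => v; apply/implyP => vS1.
have := vS1; rewrite !inE negb_or => /andP [/andP [vnu vnN] vS].
rewrite vS /= in vnN.
suff -> : nbhd e v :&: (D :&: S1) = nbhd e v :&: D by apply: good_card.
apply/setP => z; rewrite !inE; case evz: (e v z) => //=; case zD: (z \in D) => //=.
have zS : z \in S by apply: (subsetP (good_sub gD)).
rewrite zS andbT negb_or; apply/andP; split.
  by apply/eqP => zu; move: vnN; rewrite -zu esym evz.
apply/negP => euz.
have zy := good_uniq gD euz euy zD yD.
have vu : v = u by apply: (leaves yS euy ynw vS); rewrite -zy esym.
by rewrite vu eqxx in vnu.
Qed.

Lemma A_w : #|A w| <= PS e S2.
Proof.
have decomp : {in A w, forall D, D = (D :&: S2) :|: [set u; w]}.
  move=> D; rewrite inE => /andP [gD wD]; apply/setP => x.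
  rewrite !inE; case xD: (x \in D); last first.
    case: eqP => [xu|_]; first by move: xD; rewrite xu (good_u gD).
    by case: eqP => // xy; rewrite xy wD in xD.
  have xS : x \in S by apply: (subsetP (good_sub gD)).
  rewrite xS /=; case: (x =P u) => [|xnu]; first by rewrite orbT.
  case exu: (e u x) => /=.
    by rewrite (good_uniq gD exu euw xD wD) eqxx orbT.
  case ewx: (e w x) => //=.
  have ewu : e w u by rewrite esym.
  by case: xnu; apply: (card1_eq (good_card gD wS)); rewrite !inE ?ewx ?ewu ?xD ?(good_u gD).
apply: (@leq_trans #|(fun D => D :&: S2) @: A _|).
  rewrite card_in_imset //.
  by move=> D1 D2 h1 h2 /= E; rewrite (decomp _ h1) (decomp _ h2) E.
apply: subset_leq_card; apply/subsetP => D1 /imsetP [D]; rewrite /A inE.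
move=> /andP [gD wD] ->; rewrite inE /goodS subsetIr /=.
apply/forallP => v; apply/implyP => vS2.
have := vS2; rewrite !inE negb_or => /andP [nwv /andP [/andP [vnu vnN] vS]].
rewrite vS /= in vnN.
suff -> : nbhd e v :&: (D :&: S2) = nbhd e v :&: D by apply: good_card.
apply/setP => z; rewrite !inE; case evz: (e v z) => //=; case zD: (z \in D) => //=.
have zS : z \in S by apply: (subsetP (good_sub gD)).
rewrite zS andbT negb_or.
have zu : z != u by apply/eqP => zu; move: vnN; rewrite -zu esym evz.
have zw : z != w by apply/eqP => zw; rewrite -zw esym evz in nwv.
have ewzf : ~~ e w z.
  apply/negP => ewz.
  by move/eqP: zu; apply; apply: (card1_eq (good_card gD wS)); rewrite !inE ?ewz ?zD ?(good_u gD) // andbT esym.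
have euzf : ~~ e u z.
  apply/negP => euz.
  by move: zw; rewrite (good_uniq gD euz euw zD wD) eqxx.
by rewrite (negbTE ewzf) (negbTE euzf) zu.
Qed.

End Count.

Definition ispath (T : finType) (e : rel T) (S : {set T}) (s : seq T) :=
  [&& uniq s, all (fun x => x \in S) s & sorted e s].

Section Paths.
Variables (T : finType) (e : rel T).
Hypothesis esym : symmetric e.
Hypothesis eirr : irreflexive e.
Hypothesis nocyc : ~ has_cycle e.

Lemma cyc_contra a b q z : path e a (b :: q) -> uniq (a :: b :: q) -> z \in q -> e a z -> False.
Proof.
move=> pq uq zq eaz; move: pq uq; case/splitPr: zq => q1 q2 pq uq; apply: nocyc.
exists (a :: b :: rcons q1 z); split.
- have E : [:: a, b & q1 ++ z :: q2] = [:: a, b & rcons q1 z] ++ q2 by rewrite /= cat_rcons.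
  by move: uq; rewrite E cat_uniq => /andP [].
- by rewrite /= size_rcons.
- rewrite /cycle rcons_path /=; apply/andP; split.
    move: pq; rewrite -[b :: q1 ++ z :: q2]/((b :: q1) ++ z :: q2) cat_path.
    rewrite rcons_path /= => /andP [/andP [-> ->] /andP [-> _]] //.
  by rewrite last_rcons esym.
Qed.

Lemma ispath_size S s : ispath e S s -> size s <= #|T|.
Proof. by case/and3P => /card_uniqP <- _ _; apply: max_card. Qed.

Lemma longest_ex S : forall s, ispath e S s -> exists p, [/\ ispath e S p, size s <= size p &
    forall t, ispath e S t -> size t <= size p].
Proof.
suff H : forall k s, #|T| - size s <= k -> ispath e S s -> exists p, [/\ ispath e S p, size s <= size p &
    forall t, ispath e S t -> size t <= size p].
  by move=> s; apply: (H _ s).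
elim=> [|k IH] s hk ps.
  exists s; split => // t pt; have := ispath_size pt; have := ispath_size ps; lia.
case: (classic (exists t, ispath e S t /\ size s < size t)) => [[t [pt lt]]|nt].
  have [p [pp ltp mp]] := IH t ltac:(have := ispath_size pt; lia) pt.
  by exists p; split => //; apply: leq_trans (ltnW lt) ltp.
exists s; split => // t pt; case: (leqP (size t) (size s)) => // lt.
by exfalso; apply: nt; exists t.
Qed.

Definition maxp S (p : seq T) := forall t, ispath e S t -> size t <= size p.

Lemma endpoint S x0 x1 q z : ispath e S [:: x0, x1 & q] -> maxp S [:: x0, x1 & q] ->
  z \in S -> e x0 z -> z = x1.
Proof.
move=> pp mp zS ez.
have /and3P [up ap sp] := pp.
case: (boolP (z \in [:: x0, x1 & q])) => [|zn].
  rewrite !inE => /or3P [/eqP zx0|/eqP //|zq].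
    by rewrite zx0 eirr in ez.
  by exfalso; apply: (cyc_contra sp up zq ez).
have : size (z :: [:: x0, x1 & q]) <= size [:: x0, x1 & q].
  apply: mp; rewrite /ispath /= zS.
  rewrite /= in up ap sp; rewrite zn up ap sp esym ez //.
by rewrite /= ltnn.
Qed.

End Paths.

Section Find.
Variables (T : finType) (e : rel T).
Hypothesis esym : symmetric e.
Hypothesis eirr : irreflexive e.
Hypothesis nocyc : ~ has_cycle e.

Lemma find_u (S : {set T}) v v' : v \in S -> v' \in S -> e v v' -> exists u w y0,
  [/\ u \in S, w \in S, e u w, y0 \in S & e u y0] /\
  (forall z, z \in S -> e y0 z -> z = u) /\
  (forall y, y \in S -> e u y -> y != w -> forall z, z \in S -> e y z -> z = u).
Proof.
move=> vS v'S evv'.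
have pv : ispath e S [:: v; v'].
  rewrite /ispath /= !inE vS v'S /= andbT evv' !andbT.
  by apply/eqP => vv; rewrite vv eirr in evv'.
have [p [pp sp mp]] := longest_ex pv.
case: p pp sp mp => [|x0 [|x1 q]] //= pp _ mp.
have mp' : maxp e S [:: x0, x1 & q] by [].
have /and3P [up ap spp] := pp.
have x0S : x0 \in S by move: ap => /= /andP [].
have x1S : x1 \in S by move: ap => /= /and3P [].
have ex01 : e x0 x1 by move: spp => /= /andP [].
exists x1, (if q is x2 :: _ then x2 else x0), x0; split; [|split].
- split => //; last by rewrite esym.
  + by case: q pp mp mp' up ap spp => // x2 q' _ _ _ _ /= /and4P [].
  + case: q pp mp mp' up ap spp => [|x2 q'] _ _ _ _ _ /=; first by move=> _; rewrite esym.
    by case/and3P.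
- move=> z zS ez; exact: (endpoint esym eirr nocyc pp mp' zS ez).
move=> y yS ey ynw z zS eyz.
case: (y =P x0) => [yx0|ynx0].
  by apply: (endpoint esym eirr nocyc pp mp' zS); rewrite -yx0.
case: (boolP (y \in q)) => [yq|ynq].
  case: q pp mp mp' up ap spp ynw yq => [|x2 q'] //= _ _ _ up _ spp ynw.
  rewrite inE (negbTE ynw) /= => yq'.
  exfalso; apply: (cyc_contra esym nocyc (a := x1) (b := x2) (q := q') (z := y)) => //.
    by case/andP: spp.
  by case/andP: up.
have ynx1 : y != x1 by apply/eqP => yx1; rewrite yx1 eirr in ey.
have pp' : ispath e S [:: y, x1 & q].
  move: up ap spp; rewrite /ispath /= => /and3P [_ x1q uq] /and3P [_ _ aq] /andP [_ pq].
  by rewrite inE negb_or ynx1 ynq x1q uq yS x1S aq esym ey pq.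
apply: (endpoint esym eirr nocyc pp' _ zS eyz).
by move=> t pt; apply: (leq_trans (mp' t pt)).
Qed.

End Find.

Lemma PS_set0 (T : finType) (e : rel T) : PS e set0 <= 1.
Proof.
rewrite /PS -(cards1 (@set0 T)); apply: subset_leq_card; apply/subsetP => D.
by rewrite !inE /goodS subset0 => /andP [/eqP -> _].
Qed.

Lemma PS_iso (T : finType) (e : rel T) (S : {set T}) v :
  v \in S -> ~~ [exists z in S, e v z] -> PS e S = 0.
Proof.
move=> vS /existsPn H; apply/eqP; rewrite cards_eq0; apply/eqP/setP => D.
rewrite !inE; apply/negP => /andP [sub /forallP /(_ v)]; rewrite vS /=.
case/cards1P => z Hz; have : z \in nbhd e v :&: D by rewrite Hz set11.
rewrite !inE => /andP [evz zD]; have := H z; rewrite (subsetP sub _ zD) evz.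
by [].
Qed.

Lemma main_bound (T : finType) (e : rel T) : symmetric e -> irreflexive e -> ~ has_cycle e ->
  forall n (S : {set T}), #|S| <= n -> PS e S ^ 5 <= 4 ^ #|S|.
Proof.
move=> esym eirr nocyc; elim=> [|n IH] S hS.
  have /eqP S0 : #|S| == 0 by rewrite -leqn0.
  move: S0 => /cards0_eq ->; rewrite cards0.
  by have := PS_set0 e; case: (PS e set0) => [|[]].
case: (set_0Vmem S) => [->|[v vS]].
  by rewrite cards0; have := PS_set0 e; case: (PS e set0) => [|[]].
case: (boolP [exists z in S, e v z]) => [/existsP [v' /andP [v'S evv']]|niso]; last first.
  by rewrite (PS_iso vS niso).
have [u [w [y0 [[uS wS euw y0S euy0] [leafy0 leaves]]]]] := find_u esym eirr nocyc vS v'S evv'.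
set N := S :&: nbhd e u.
set S1 := S :\: (u |: N).
set S2 := S1 :\: nbhd e w.
have uN : u \notin N by rewrite !inE eirr andbF.
have cardS : #|S1| + #|N|.+1 = #|S|.
  rewrite -(cardsID (u |: N) S) addnC -[#|N|.+1]add1n.
  have -> : S :&: (u |: N) = u |: N.
    apply/setIidPr; apply/subsetP => x; rewrite !inE => /orP [/eqP ->|/andP [] //].
    done.
  by rewrite cardsU1 uN.
have S1n : #|S1| <= n by move: hS; rewrite -cardS; lia.
have S21 : #|S2| <= #|S1| by apply: subset_leq_card; apply: subsetDl.
pose A y := [set D | goodS e S D & y \in D].
have bA : forall y, y \in N -> #|A y| ^ 5 <= 4 ^ #|S1|.
  move=> y yN; case: (eqVneq y w) => [->|ynw].
    apply: leq_trans (leq_trans (IH S2 (leq_trans S21 S1n)) (leq_pexp2l (isT : 0 < 4) S21)).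
    by rewrite leq_exp2r //; apply: (A_w esym uS wS euw y0S leafy0).
  apply: leq_trans (IH S1 S1n).
  by rewrite leq_exp2r //; apply: (A_other esym uS y0S leafy0 leaves yN ynw).
pose M := \max_(y in N) #|A y|.
have bM : M ^ 5 <= 4 ^ #|S1|.
  rewrite /M; elim/big_rec: _ => [|y x yN hx]; first by rewrite exp0n.
  by rewrite /maxn; case: ifP => _ //; apply: bA.
have bP : PS e S <= #|N| * M.
  apply: leq_trans (subset_leq_card (cover_A e uS)) _.
  apply: leq_trans (card_bigcup_leq _ _) _.
  rewrite -sum_nat_const; apply: leq_sum => y yN; exact: leq_bigmax_cond.
rewrite -cardS; apply: leq_trans (_ : (#|N| * M) ^ 5 <= _).
  by rewrite leq_exp2r.
rewrite expnMn expnD mulnC; apply: leq_mul => //.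
exact: pow5_bound.
Qed.

Lemma star_forest k : forest (star_forest_edge k).
Proof.
split; first split.
- move=> x y; rewrite /star_forest_edge eq_sym; congr (_ && _).
  by case: (val x.2 == 0); case: (val y.2 == 0).
- by move=> x; rewrite /star_forest_edge eqxx /= eqxx.
case=> p [up sp cp].
case: p up sp cp => [|x0 [|x1 [|x2 r]]] // up _ cp.
have centers : forall x y : 'I_k * 'I_5, x.1 == y.1 -> val x.2 == 0 -> val y.2 == 0 -> x = y.
  move=> [i a] [j b] /= /eqP -> /eqP ha /eqP hb; congr (_, _); by apply: val_inj; rewrite /= ha hb.
move: cp; rewrite /cycle rcons_path /= => /andP [/and3P [e01 e12 _] el].
move: e01 e12 el; rewrite /star_forest_edge.
case/andP => /eqP h01 c01; case/andP => /eqP h12 c12; case/andP => /eqP hl cl.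
case c1: (val x1.2 == 0).
  have c0 : (val x0.2 == 0) = false by move: c01; rewrite c1; case: (_ == 0).
  have cla : val (last x2 r).2 == 0 by move: cl; rewrite c0; case: (_ == 0).
  have E : last x2 r = x1 by apply: centers => //; rewrite hl h01.
  move: up => /= /andP [_ /andP [x1n _]].
  by move: x1n; rewrite -E mem_last.
have c0 : val x0.2 == 0 by move: c01; rewrite c1; case: (_ == 0).
have c2 : val x2.2 == 0 by move: c12; rewrite c1; case: (_ == 0).
have E : x0 = x2 by apply: centers => //; rewrite h01 h12.
by move: up; rewrite /= E !inE eqxx /= orbT.
Qed.

Definition Df k (f : {ffun 'I_k -> 'I_4}) : {set 'I_k * 'I_5} :=
  [set x | (val x.2 == 0) || (val x.2 == (f x.1).+1)].

Lemma Df_ptds k f : perfect_total_dominating (star_forest_edge k) (@Df k f).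
Proof.
apply/forallP => [[i a]].
have fi5 : (f i).+1 < 5 by have := ltn_ord (f i).
apply/cards1P.
case a0: (val a == 0).
  exists (i, inord (f i).+1); apply/setP => [[j b]]; rewrite !inE /star_forest_edge /=.
  rewrite xpair_eqE a0 eq_sym; case: (eqVneq j i) => [->|] //=.
  by rewrite -val_eqE /= inordK //; case: (val b =P 0) => [->|] //.
exists (i, ord0); apply/setP => [[j b]]; rewrite !inE /star_forest_edge /=.
rewrite xpair_eqE a0 eq_sym; case: (eqVneq j i) => [->|] //=.
by rewrite -val_eqE /=; case: (val b =P 0) => [->|].
Qed.

Lemma Df_inj k : injective (@Df k).
Proof.
move=> f g E; apply/ffunP => i.
have fi5 : (f i).+1 < 5 by have := ltn_ord (f i).
have : (i, inord (f i).+1) \in Df g by rewrite -E inE /= inordK // eqxx orbT.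
by rewrite inE /= inordK //= eqSS => /eqP h; apply: val_inj.
Qed.

Theorem mainTheorem19 :
  (forall (T : finType) (e : rel T), forest e ->
     num_ptds e ^ 5 <= 4 ^ #|T|) /\
  (forall k : nat,
     forest (star_forest_edge k) /\
     #|{: 'I_k * 'I_5}| = 5 * k /\
     num_ptds (star_forest_edge k) = 4 ^ k).
Proof.
have part1 : forall (T : finType) (e : rel T), forest e -> num_ptds e ^ 5 <= 4 ^ #|T|.
  move=> T e [[esym eirr] nocyc]; rewrite num_ptds_PS -cardsT.
  exact: (main_bound esym eirr nocyc (leqnn _)).
split => // k; split; first exact: star_forest.
have cardk : #|{: 'I_k * 'I_5}| = 5 * k by rewrite card_prod !card_ord mulnC.
split => //; apply/eqP; rewrite eqn_leq; apply/andP; split.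
  have := part1 _ _ (star_forest k); rewrite cardk expnM.
  by rewrite -expnM mulnC expnM leq_exp2r.
rewrite /num_ptds.
have -> : 4 ^ k = #|{ffun 'I_k -> 'I_4}| by rewrite card_ffun !card_ord.
rewrite -(card_imset _ (@Df_inj k)); apply: subset_leq_card.
apply/subsetP => D /imsetP [f _ ->]; rewrite inE; exact: Df_ptds.
Qed.
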